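(* For each $n\ge1$, there are exactly $n$ pairwise non-isomorphic digraphs whose $H$-spectrum equals that of $\overleftrightarrow{K_n}$, namely $\overleftrightarrow{K_n}$ and $Y_{a,n-a}$ for $a=1,\dots,n-1$.
   Context: A digraph has a finite vertex set and an arc set of ordered pairs of distinct vertices; $\{x,y\}$ is a digon if both $xy,yx$ are arcs. $H(X)$ has $(u,v)$-entry $1$ if $uv$ and $vu$ are arcs, $i$ if only $uv$ is an arc, $-i$ if only $vu$ is an arc, and $0$ otherwise; the $H$-spectrum is the multiset of eigenvalues of $H(X)$. $\overleftrightarrow{K_n}$ is the complete digraph on $n$ vertices (every pair of vertices forms a digon), so $H(\overleftrightarrow{K_n})$ is the adjacency matrix of $K_n$. For $1\le a\le n-1$, $Y_{a,n-a}$ is the digraph on a vertex set $A\cup B$ with $|A|=a$, $|B|=n-a$, in which every pair inside $A$ and every pair inside $B$ forms a digon, and for every $u\in A$, $v\in B$ there is the single arc $uv$ (and not $vu$). *)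

(* Defs.v *)
From HB Require Import structures.
From mathcomp Require Import all_boot all_order all_algebra all_field.
Set Implicit Arguments. Unset Strict Implicit. Unset Printing Implicit Defensive.
Import Order.TTheory GRing.Theory Num.Theory.
Local Open Scope ring_scope.

Definition is_digraph (m : nat) (arc : rel 'I_m) : Prop := irreflexive arc.

Definition Hmx (m : nat) (arc : rel 'I_m) : 'M[algC]_m :=
  \matrix_(u, v)
    (if arc u v && arc v u then 1
     else if arc u v then 'i
     else if arc v u then - 'i
     else 0).

Definition Hspectrum (m : nat) (arc : rel 'I_m) : algC -> nat :=
  fun z => mup z (char_poly (Hmx arc)).

Definition digraph_iso (m k : nat) (arc1 : rel 'I_m) (arc2 : rel 'I_k) : Prop :=
  exists f : 'I_m -> 'I_k, bijective f /\ forall u v, arc1 u v = arc2 (f u) (f v).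

Definition Kn (n : nat) : rel 'I_n := fun u v => u != v.

(* Y_{a,n-a} on vertex set 'I_n, with A = {i | i < a}, B = {i | a <= i}:
   digons inside A and inside B, single arcs from A to B. *)
Definition Yarc (n a : nat) : rel 'I_n :=
  fun u v => (u != v) && (((u < a)%N == (v < a)%N) || ((u < a)%N && (a <= v)%N)).
Arguments Kn n : clear implicits.
Arguments Yarc n a : clear implicits.

(* Main.v *)
Require Import Defs.
From HB Require Import structures.
From mathcomp Require Import all_boot all_order all_algebra all_field.
From mathcomp Require Import ring zify.
Set Implicit Arguments. Unset Strict Implicit. Unset Printing Implicit Defensive.
Import Order.TTheory GRing.Theory Num.Theory.
Local Open Scope ring_scope.


Lemma iC_neq0 : 'i != 0 :> algC.
Proof. exact: neq0Ci. Qed.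
Lemma i_neq1 : 'i != 1 :> algC.
Proof.
apply/eqP=> h; have e : ('i : algC) ^+ 2 = -1 := sqrCi _; move: e; rewrite h expr1n => /eqP.
by rewrite -subr_eq0 opprK -mulr2n pnatr_eq0.
Qed.
Lemma i_neqN1 : 'i != -1 :> algC.
Proof.
apply/eqP=> h; have e : ('i : algC) ^+ 2 = -1 := sqrCi _; move: e; rewrite h sqrrN expr1n => /eqP.
by rewrite -subr_eq0 opprK -mulr2n pnatr_eq0.
Qed.
Lemma i_neqNi : 'i != -'i :> algC.
Proof.
apply/eqP=> h; have : 'i + 'i = 0 :> algC by rewrite {1}h addNr.
by move/eqP; rewrite -mulr2n -mulr_natr mulf_eq0 pnatr_eq0 orbF (negPf iC_neq0).
Qed.
Lemma one_neqN1 : 1 != -1 :> algC.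
Proof. by rewrite -subr_eq0 opprK -mulr2n pnatr_eq0. Qed.

Lemma conj_i : ('i : algC)^* = -'i.
Proof. exact: conjCi. Qed.

Lemma conj_Ni : (-'i : algC)^* = 'i.
Proof. by rewrite -conj_i conjCK. Qed.

Lemma Hmx_conj m (arc : rel 'I_m) u w : Hmx arc w u = (Hmx arc u w)^*.
Proof.
rewrite !mxE; case: (arc u w); case: (arc w u) => /=.
all: by rewrite ?rmorph1 ?conj_Ni ?conj_i ?rmorph0.
Qed.

Lemma Hmx_diag m (arc : rel 'I_m) u : is_digraph arc -> Hmx arc u u = 0.
Proof. by move=> irr; rewrite mxE irr. Qed.

Lemma arc_Hmx m (arc : rel 'I_m) u w :
  arc u w = (Hmx arc u w == 1) || (Hmx arc u w == 'i).
Proof.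
rewrite !mxE; case: (arc u w); case: (arc w u) => //=; rewrite ?eqxx ?orbT //.
- rewrite eqr_oppLR (negPf i_neqN1) /= eq_sym (negPf i_neqNi) //.
- by rewrite eq_sym oner_eq0 eq_sym (negPf iC_neq0).
Qed.


Lemma char_poly_sim n (A P Q : 'M[algC]_n) : P *m Q = 1%:M ->
  char_poly (P *m A *m Q) = char_poly A.
Proof.
move=> PQ.
have eX : char_poly_mx (P *m A *m Q) =
   map_mx polyC P *m char_poly_mx A *m map_mx polyC Q.
  rewrite /char_poly_mx mulmxBr mulmxBl !map_mxM; congr (_ - _).
  rewrite mul_mx_scalar -scalemxAl -map_mxM PQ.
  by rewrite map_scalar_mx /= scale_scalar_mx mulr1.
rewrite /char_poly eX !det_mulmx !det_map_mx.
rewrite mulrC mulrA -rmorphM /= [\det Q * _]mulrC -det_mulmx PQ det1 mul1r.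
by [].
Qed.

Definition dY n a : 'rV[algC]_n := \row_(u < n) (if (u < a)%N then 1 else - 'i).
Definition dY' n a : 'rV[algC]_n := \row_(u < n) (if (u < a)%N then 1 else 'i).

Lemma Yarc_sim n a :
  Hmx (Yarc n a) = diag_mx (dY n a) *m Hmx (Kn n) *m diag_mx (dY' n a).
Proof.
rewrite mul_diag_mx mul_mx_diag; apply/matrixP=> u w; rewrite !mxE /Yarc /Kn.
have [->|uw] := eqVneq u w; first by rewrite /= !mulr0 mul0r.
rewrite /=.
case: (ltnP u a) => ua; case: (ltnP w a) => wa /=; rewrite ?mulr1 ?mul1r //.
by rewrite mulNr -expr2 sqrCi opprK.
Qed.

Lemma dY_inv n a : diag_mx (dY n a) *m diag_mx (dY' n a) = 1%:M.
Proof.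
rewrite mulmx_diag; apply/matrixP=> u w; rewrite !mxE.
case: (u < a)%N; rewrite ?mulr1 // mulNr -expr2 sqrCi opprK //.
Qed.

Lemma part1 n a z : Hspectrum (Yarc n a) z = Hspectrum (Kn n) z.
Proof. by rewrite /Hspectrum Yarc_sim char_poly_sim // dY_inv. Qed.


Lemma Yarc_AB n a (u v : 'I_n) : (u < a)%N -> (a <= v)%N ->
  Yarc n a u v /\ ~~ Yarc n a v u.
Proof.
move=> ua av; have uv : u != v.
  by apply/eqP=> e; move: ua; rewrite e ltnNge av.
rewrite /Yarc /= uv (eq_sym v u) uv ua ltnNge av /=; split=> //.
Qed.

Lemma part2 n a : (1 <= a <= n - 1)%N -> ~ digraph_iso (Kn n) (Yarc n a).
Proof.
move=> /andP[a1 an] [f [[g fg gf] h]].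
have n0 : (0 < n)%N by rewrite (leq_trans a1) // (leq_trans an) // leq_subr.
have n1 : (n - 1 < n)%N by rewrite subn1 prednK // leqnn.
pose u0 : 'I_n := Ordinal n0. pose v0 : 'I_n := Ordinal n1.
have [y1 y2] := @Yarc_AB n a u0 v0 a1 an.
have e1 := h (g u0) (g v0); have e2 := h (g v0) (g u0); rewrite !gf in e1 e2.
rewrite /Kn eq_sym in e2; rewrite -e1 /Kn in y1.
by move: y2; rewrite -e2 y1.
Qed.

Definition Sset n a := [set u : 'I_n | [exists v, Yarc n a u v && ~~ Yarc n a v u]].

Lemma Sset_eq n a : (1 <= a <= n - 1)%N -> Sset n a = [set u : 'I_n | (u < a)%N].
Proof.
move=> /andP[a1 an].
have n0 : (0 < n)%N by rewrite (leq_trans a1) // (leq_trans an) // leq_subr.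
have n1 : (n - 1 < n)%N by rewrite subn1 prednK // leqnn.
apply/setP=> u; rewrite !inE; case: (ltnP u a) => ua.
  apply: (introT existsP); exists (Ordinal n1).
  by have [-> ->] := @Yarc_AB n a u (Ordinal n1) ua an.
apply: negbTE; apply/negP=> /existsP[v /andP[]]; rewrite /Yarc; case: (ltnP v a) => va;
  rewrite ?(leqNgt a u) ?ltnNge ?ua ?va /=.
- by rewrite andbF.
- by rewrite eq_sym => -> .
Qed.

Lemma card_lt n a : (a <= n)%N -> #|[set u : 'I_n | (u < a)%N]| = a.
Proof.
move=> an.
have -> : [set u : 'I_n | (u < a)%N] = widen_ord an @: [set: 'I_a].
  apply/setP=> u; rewrite !inE; apply/idP/imsetP.
    by move=> ua; exists (Ordinal ua); rewrite ?inE //; apply: val_inj.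
  by case=> i _ ->; rewrite /= ltn_ord.
rewrite card_imset ?cardsT ?card_ord //.
by move=> i j /(congr1 val) /= e; apply: val_inj.
Qed.

Lemma part3 n a b : (1 <= a <= n - 1)%N -> (1 <= b <= n - 1)%N ->
  digraph_iso (Yarc n a) (Yarc n b) -> a = b.
Proof.
move=> ha hb [f [[g fg gf] h]].
have an : (a <= n)%N by case/andP: ha => _ /leq_trans; apply; apply: leq_subr.
have bn : (b <= n)%N by case/andP: hb => _ /leq_trans; apply; apply: leq_subr.
rewrite -(card_lt an) -(card_lt bn) -(Sset_eq ha) -(Sset_eq hb).
have -> : Sset n a = f @^-1: Sset n b.
  apply/setP=> u; rewrite !inE; apply/existsP/existsP => [[v]|[v]].
    by rewrite !h => hv; exists (f v).
  by rewrite -[v]gf -!h => hv; exists (g v).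
by rewrite card_preimset //; apply: (can_inj fg).
Qed.


Lemma iso_of_set n (arc : rel 'I_n) (A : {set 'I_n}) (x : 'I_n) (y : 'I_n) :
  x \in A -> y \in ~: A ->
  (forall u w, arc u w = (u != w) && (((u \in A) == (w \in A)) || ((u \in A) && (w \notin A)))) ->
  digraph_iso arc (Yarc n #|A|).
Proof.
move=> xA yA harc.
have E : (#|A| + #|~: A| = n)%N by rewrite cardsC card_ord.
pose f (u : 'I_n) : 'I_n := cast_ord E (if u \in A then lshift #|~:A| (enum_rank_in xA u)
                                       else rshift #|A| (enum_rank_in yA u)).
have fv u : val (f u) = if u \in A then val (enum_rank_in xA u) else (#|A| + enum_rank_in yA u)%N.
  by rewrite /f; case: (u \in A).
have fA u : (f u < #|A|)%N = (u \in A).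
  rewrite fv; case: ifP => _; first by rewrite ltn_ord.
  by rewrite ltnNge leq_addr.
have finj : injective f.
  move=> u w /(congr1 val); rewrite !fv.
  case uA: (u \in A); case wA: (w \in A).
  - move=> /val_inj e.
    by rewrite -(enum_rankK_in xA uA) -(enum_rankK_in xA wA) e.
  - by move=> e; have := ltn_ord (enum_rank_in xA u); rewrite e ltnNge leq_addr.
  - by move=> e; have := ltn_ord (enum_rank_in xA w); rewrite -e ltnNge leq_addr.
  - move=> /eqP; rewrite eqn_add2l => /eqP /val_inj e.
    have uA' : u \in ~: A by rewrite inE uA.
    have wA' : w \in ~: A by rewrite inE wA.
    by rewrite -(enum_rankK_in yA uA') -(enum_rankK_in yA wA') e.
exists f; split; first exact: injF_bij.
move=> u w; rewrite harc /Yarc /= (inj_eq finj) !fA leqNgt fA.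
by [].
Qed.


Definition adj p q (X : 'M[algC]_(p, q)) : 'M[algC]_(q, p) := (map_mx Num.conj X)^T.

Lemma adjM p q r (X : 'M[algC]_(p, q)) (Y : 'M[algC]_(q, r)) :
  adj (X *m Y) = adj Y *m adj X.
Proof. by rewrite /adj map_mxM trmx_mul. Qed.

Lemma adj_self0 p q (X : 'M[algC]_(p, q)) : adj X *m X = 0 -> X = 0.
Proof.
move=> h; apply/matrixP => i j; rewrite mxE.
have := congr1 (fun A : 'M[algC]_q => A j j) h; rewrite !mxE /adj => hs.
have {}hs : \sum_k (X k j)^* * X k j = 0.
  by rewrite -[RHS]hs; apply: eq_bigr => k _; rewrite !mxE.
have ge : forall k, xpredT k -> 0 <= (X k j)^* * X k j.
  by move=> k _; rewrite mulrC mul_conjC_ge0.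
have := psumr_eq0P ge hs (i := i) isT.
by rewrite mulrC => /eqP; rewrite mul_conjC_eq0 => /eqP.
Qed.

Definition herm n (N : 'M[algC]_n) := forall i j, N j i = (N i j)^*.

Lemma herm_adj n (N : 'M[algC]_n) : herm N -> adj N = N.
Proof. by move=> hN; apply/matrixP => i j; rewrite !mxE hN. Qed.

Lemma herm_red n q (N : 'M[algC]_n) (X : 'M[algC]_(n, q)) : herm N ->
  N *m (N *m X) = 0 -> N *m X = 0.
Proof.
move=> hN h; apply: adj_self0.
by rewrite adjM (herm_adj hN) -mulmxA h mulmx0.
Qed.

Lemma herm_pow n (N X : 'M[algC]_n.+1) k : herm N -> N ^+ k * X = 0 -> N * X = 0.
Proof.
move=> hN; case: k => [|k]; first by rewrite expr0 mul1r => ->; rewrite mulr0.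
elim: k => [|k IH]; first by rewrite expr1.
move=> h; apply: IH.
have := herm_red (X := N ^+ k * X) hN; rewrite !mulmxE !mulrA -!exprS; apply.
by rewrite -[N * N * _]mulrA -exprS -exprS.
Qed.


Lemma prod_two (al be : algC) s : al != be ->
  all [pred z | (z == al) || (z == be)] s ->
  \prod_(z <- s) ('X - z%:P) =
  ('X - al%:P) ^+ count_mem al s * ('X - be%:P) ^+ count_mem be s.
Proof.
move=> ab.
have abF : (al == be) = false by apply/eqP => e; move: ab; rewrite e eqxx.
have baF : (be == al) = false by apply/eqP => e; move: ab; rewrite e eqxx.
elim: s => [|r s IH]; first by rewrite big_nil !expr0 mulr1.
rewrite /= big_cons => /andP[/orP[] /eqP -> hs]; rewrite IH // eqxx /=.
- by rewrite abF add0n add1n exprS mulrA.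
- by rewrite baF add0n add1n exprS mulrCA.
Qed.

Lemma Kn_root n' z : root (char_poly (Hmx (Kn n'.+1))) z -> z = n'%:R \/ z = -1.
Proof.
rewrite -eigenvalue_root_char => /eigenvalueP [v hv vnz].
pose J : 'M[algC]_n'.+1 := const_mx 1.
have eH : Hmx (Kn n'.+1) = J - 1%:M.
  apply/matrixP=> u w; rewrite !mxE /Kn eq_sym; case: eqP => //= _;
  by rewrite ?subrr ?subr0.
have hJ : v *m J = (z + 1) *: v.
  by move: hv; rewrite eH mulmxBr mulmx1 => /eqP; rewrite subr_eq scalerDl scale1r => /eqP.
have JJ : J *m J = n'.+1%:R *: J.
  apply/matrixP=> u w; rewrite !mxE.
  under eq_bigr do rewrite !mxE mulr1.
  by rewrite sumr_const card_ord mulr1.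
have : ((z + 1) * (z + 1) - n'.+1%:R * (z + 1)) *: v = 0.
  rewrite scalerBl -!scalerA -hJ [(z + 1) *: (v *m J)]scalemxAl -hJ -mulmxA JJ -scalemxAr.
  by rewrite subrr.
move=> /eqP; rewrite scaler_eq0 (negPf vnz) orbF -mulrBl mulf_eq0 => /orP[].
  by rewrite -natr1 subr_eq0 => /eqP /addIr ->; left.
by rewrite addr_eq0 => /eqP ->; right.
Qed.


Lemma spec_size m n' (arc : rel 'I_m) :
  (forall z, Hspectrum arc z = Hspectrum (Kn n'.+1) z) ->
  m = n'.+1 /\ exists s, char_poly (Hmx arc) = \prod_(z <- s) ('X - z%:P) /\
     all [pred z | (z == n'%:R) || (z == -1)] s.
Proof.
move=> spec.
have [s hs] := closed_field_poly_normal (char_poly (Hmx arc)).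
rewrite (monicP (char_poly_monic _)) scale1r in hs.
have [t ht] := closed_field_poly_normal (char_poly (Hmx (Kn n'.+1))).
rewrite (monicP (char_poly_monic _)) scale1r in ht.
have cnt z : count_mem z s = count_mem z t.
  by have := spec z; rewrite /Hspectrum hs ht !mu_prod_XsubC.
have pe : perm_eq s t by apply/allP => x _; apply/eqP; exact: cnt.
split.
  have := size_char_poly (Hmx arc); rewrite hs size_prod_XsubC => e1.
  have := size_char_poly (Hmx (Kn n'.+1)); rewrite ht size_prod_XsubC => e2.
  by case: e1 => <-; case: e2 => <-; exact: perm_size pe.
exists s; split => //; apply/allP => z zs.
have zt : z \in t by rewrite -(perm_mem pe).
have : root (char_poly (Hmx (Kn n'.+1))) z by rewrite ht root_prod_XsubC.
by case/Kn_root => ->; rewrite /= eqxx ?orbT.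
Qed.

Lemma herm_Hmx m (arc : rel 'I_m) : herm (Hmx arc).
Proof. by move=> i j; rewrite Hmx_conj. Qed.

Lemma herm_addsc n (A : 'M[algC]_n) c : herm A -> c^* = c -> herm (A + c%:M).
Proof.
move=> hA hc i j; rewrite !mxE rmorphD /= hA rmorphMn /= hc eq_sym.
by [].
Qed.

Lemma main_mat n' (arc : rel 'I_n'.+1) :
  (exists s, char_poly (Hmx arc) = \prod_(z <- s) ('X - z%:P) /\
     all [pred z | (z == n'%:R) || (z == -1)] s) ->
  (Hmx arc + 1%:M) * (Hmx arc + 1%:M) = n'.+1%:R *: (Hmx arc + 1%:M).
Proof.
move=> [s [hs hall]].
set H := Hmx arc; set M := H + 1%:M.
have ab : n'%:R != -1 :> algC.
  by rewrite -addr_eq0 natr1 pnatr_eq0.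
have CH := Cayley_Hamilton H.
rewrite hs (prod_two ab hall) rmorphM /= !rmorphXn /= !rmorphB /= horner_mx_X !horner_mx_C in CH.
set a := count_mem _ s in CH; set b := count_mem _ s in CH.
have e1 : H - n'%:R%:M = M + (- n'.+1%:R)%:M.
  rewrite /M -natr1 -addrA -raddfD /= -raddfN /=; congr (_ + _%:M).
  by rewrite opprD addrCA subrr addr0.
have e2 : H - (-1)%:M = M by rewrite /M raddfN opprK.
rewrite e1 e2 in CH.
set N1 := M + _ in CH.
have hM : herm M by apply: herm_addsc; [exact: herm_Hmx | exact: rmorph1].
have hN1 : herm N1 by apply: herm_addsc => //; rewrite rmorphN /= conjC_nat.
have c12 : GRing.comm N1 M.
  apply: commr_sym; rewrite /N1; apply: commrD; first exact: commr_refl.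
  exact: comm_mx_scalar.
have h1 := herm_pow hN1 CH.
have h2 : M ^+ b * N1 = 0 by rewrite -(commrX b c12).
have h3 := herm_pow hM h2.
move: h3; rewrite /N1 mulrDr => /eqP; rewrite addr_eq0 => /eqP ->.
by rewrite -mulmxE mul_mx_scalar scaleNr opprK.
Qed.


Lemma Hmx_cases m (arc : rel 'I_m) u w :
  [\/ Hmx arc u w = 1, Hmx arc u w = 'i, Hmx arc u w = -'i | Hmx arc u w = 0].
Proof.
rewrite mxE; case: (arc u w); case: (arc w u) => /=.
- by constructor 1.
- by constructor 2.
- by constructor 3.
- by constructor 4.
Qed.

Section Entries.
Variables (n' : nat) (arc : rel 'I_n'.+1).
Hypothesis irr : is_digraph arc.
Let H := Hmx arc.
Let M := H + 1%:M.
Hypothesis hM : M * M = n'.+1%:R *: M.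

Lemma M_herm u w : M w u = (M u w)^*.
Proof. exact: (herm_addsc (herm_Hmx arc) (rmorph1 _)). Qed.

Lemma M_off u w : u != w -> M u w = H u w.
Proof. by move=> uw; rewrite /M mxE [1%:M u w]mxE (negPf uw) addr0. Qed.

Lemma M_diag u : M u u = 1.
Proof. by rewrite /M mxE [1%:M u u]mxE eqxx Hmx_diag // add0r. Qed.

Lemma MM u w : \sum_k M u k * M k w = n'.+1%:R * M u w.
Proof. by have := congr1 (fun A : 'M_n'.+1 => A u w) hM; rewrite !mxE. Qed.

Lemma t01 u k : M u k * (M u k)^* = 1 \/ M u k * (M u k)^* = 0.
Proof.
have [->|uk] := eqVneq u k; first by rewrite M_diag rmorph1 mulr1; left.
rewrite M_off //; case: (Hmx_cases arc u k) => ->.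
- by rewrite rmorph1 mulr1; left.
- by rewrite conj_i mulrN -expr2 sqrCi opprK; left.
- by rewrite conj_Ni mulNr -expr2 sqrCi opprK; left.
- by rewrite mul0r; right.
Qed.

Lemma unimod u k : M u k * (M u k)^* = 1.
Proof.
have hs : \sum_k (1 - M u k * (M u k)^*) = 0.
  rewrite sumrB sumr_const card_ord.
  under eq_bigr do rewrite -M_herm.
  by rewrite MM M_diag mulr1 subrr.
have ge : forall k, xpredT k -> 0 <= 1 - M u k * (M u k)^*.
  by move=> j _; case: (t01 u j) => ->; rewrite ?subrr ?subr0 ?ler01.
have := psumr_eq0P ge hs (i := k) isT.
by move/eqP; rewrite subr_eq0 => /eqP <-.
Qed.

Lemma rank1 u w k : M u k * M k w = M u w.
Proof.
set c := M u w.
pose z j := M u j * M j w.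
have zz j : z j * (z j)^* = 1.
  by rewrite /z rmorphM /= mulrACA !unimod mulr1.
have cc : c * c^* = 1 by apply: unimod.
have ex j : (z j - c) * (z j - c)^* = 2%:R - (z j * c^* + c * (z j)^*).
  rewrite rmorphB /=.
  have -> : (z j - c) * ((z j)^* - c^*) = z j * (z j)^* + c * c^* - (z j * c^* + c * (z j)^*).
    by ring.
  by rewrite zz cc.
have hs : \sum_j (z j - c) * (z j - c)^* = 0.
  under eq_bigr do rewrite ex.
  rewrite sumrB sumr_const card_ord big_split /= -mulr_suml -mulr_sumr -rmorph_sum /=.
  rewrite /z MM -/c rmorphM /= conjC_nat.
  have -> : n'.+1%:R * c * c^* + c * (n'.+1%:R * c^*) = n'.+1%:R * (c * c^*) *+ 2 by ring.
  by rewrite cc mulr1; ring.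
have ge : forall j, xpredT j -> 0 <= (z j - c) * (z j - c)^*.
  by move=> j _; apply: mul_conjC_ge0.
have := psumr_eq0P ge hs (i := k) isT.
by move/eqP; rewrite mul_conjC_eq0 subr_eq0 => /eqP.
Qed.

End Entries.


Lemma e_i1 : ('i == 1 :> algC) = false. Proof. exact: negbTE i_neq1. Qed.
Lemma e_1i : (1 == 'i :> algC) = false. Proof. by rewrite eq_sym e_i1. Qed.
Lemma e_iNi : ('i == -'i :> algC) = false. Proof. exact: negbTE i_neqNi. Qed.
Lemma e_Nii : (-'i == 'i :> algC) = false. Proof. by rewrite eq_sym e_iNi. Qed.
Lemma e_Ni1 : (-'i == 1 :> algC) = false.
Proof. by rewrite eqr_oppLR; apply: negbTE; apply: i_neqN1. Qed.
Lemma e_1Ni : (1 == -'i :> algC) = false. Proof. by rewrite eq_sym e_Ni1. Qed.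
Lemma mul_iNi : 'i * -'i = 1 :> algC.
Proof. by rewrite mulrN -expr2 sqrCi opprK. Qed.
Lemma mul_Nii : -'i * 'i = 1 :> algC.
Proof. by rewrite mulNr -expr2 sqrCi opprK. Qed.

Section Classify.
Variables (n' : nat) (arc : rel 'I_n'.+1).
Hypothesis irr : is_digraph arc.
Let H := Hmx arc.
Let M := H + 1%:M.
Hypothesis hM : M * M = n'.+1%:R *: M.

Let v u := M u ord0.

Lemma Mvv u w : M u w = v u * (v w)^*.
Proof. by rewrite -(rank1 irr hM u w ord0) /v (M_herm arc w ord0). Qed.

Lemma v0 : v ord0 = 1.
Proof. exact: M_diag. Qed.

Lemma vcases u : [\/ v u = 1, v u = 'i | v u = -'i].
Proof.
have [->|u0] := eqVneq u ord0; first by rewrite v0; constructor 1.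
have hu := unimod irr hM u ord0.
rewrite /v M_off // in hu *.
case: (Hmx_cases arc u ord0) => e; rewrite e in hu *.
- by constructor 1.
- by constructor 2.
- by constructor 3.
- by move: hu; rewrite mul0r => /eqP; rewrite eq_sym oner_eq0.
Qed.

Lemma arcM u w : u != w -> arc u w = (M u w == 1) || (M u w == 'i).
Proof. by move=> uw; rewrite M_off // arc_Hmx. Qed.

Lemma classify : digraph_iso arc (Kn n'.+1) \/
  exists a, (1 <= a <= n'.+1 - 1)%N /\ digraph_iso arc (Yarc n'.+1 a).
Proof.
case: (boolP [exists u, v u == 'i]) => [/existsP[u1 /eqP h1]|hn1];
case: (boolP [exists u, v u == -'i]) => [/existsP[u2 /eqP h2]|hn2].
- exfalso.
  have u12 : u1 != u2 by apply/eqP=> e; move: h1; rewrite e h2 => /eqP; rewrite e_Nii.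
  have := Mvv u1 u2; rewrite h1 h2 conj_Ni -expr2 sqrCi M_off //.
  case: (Hmx_cases arc u1 u2) => ->; apply/eqP.
  - exact: one_neqN1.
  - exact: i_neqN1.
  - by rewrite eqr_oppLR opprK i_neq1.
  - by rewrite eq_sym oppr_eq0 oner_eq0.
- right; pose A := [set u | v u == 'i].
  have xA : u1 \in A by rewrite inE h1.
  have yA : ord0 \in ~: A by rewrite !inE v0 e_1i.
  have vc u : v u = 1 \/ v u = 'i.
    case: (vcases u) => e; [by left | by right |].
    by move: hn2 => /existsP; case; exists u; rewrite e.
  exists #|A|; split.
    have := cardsC A; rewrite card_ord => e.
    have c1 : (0 < #|A|)%N by apply/card_gt0P; exists u1.
    have c2 : (0 < #|~: A|)%N by apply/card_gt0P; exists ord0.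
    by move: c1 c2 e; lia.
  apply: (iso_of_set xA yA) => u w.
  have [<-|uw] := eqVneq u w; first by rewrite irr eqxx.
  rewrite arcM // Mvv !inE /=.
  by case: (vc u) => ->; case: (vc w) => ->;
    rewrite ?rmorph1 ?conj_i ?mulr1 ?mul1r ?mul_iNi ?eqxx ?e_Ni1 ?e_Nii ?e_i1 ?e_1i.
- right; pose A := [set u | v u == 1].
  have xA : ord0 \in A by rewrite inE v0.
  have yA : u2 \in ~: A by rewrite !inE h2 e_Ni1.
  have vc u : v u = 1 \/ v u = -'i.
    case: (vcases u) => e; [by left | | by right].
    by move: hn1 => /existsP; case; exists u; rewrite e.
  exists #|A|; split.
    have := cardsC A; rewrite card_ord => e.
    have c1 : (0 < #|A|)%N by apply/card_gt0P; exists ord0.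
    have c2 : (0 < #|~: A|)%N by apply/card_gt0P; exists u2.
    by move: c1 c2 e; lia.
  apply: (iso_of_set xA yA) => u w.
  have [<-|uw] := eqVneq u w; first by rewrite irr eqxx.
  rewrite arcM // Mvv !inE /=.
  by case: (vc u) => ->; case: (vc w) => ->;
    rewrite ?rmorph1 ?conj_Ni ?mulr1 ?mul1r ?mul_Nii ?eqxx ?e_Ni1 ?e_Nii ?e_i1 ?e_1i ?e_1Ni.
- left; exists id; split; first by exists id.
  have vc u : v u = 1.
    case: (vcases u) => e //.
      by move: hn1 => /existsP; case; exists u; rewrite e.
    by move: hn2 => /existsP; case; exists u; rewrite e.
  move=> u w; rewrite /Kn; have [<-|uw] := eqVneq u w; first by rewrite irr.
  by rewrite arcM // Mvv !vc rmorph1 mulr1 eqxx.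
Qed.

End Classify.


Theorem proposition8p6 (n : nat) : (1 <= n)%N ->
  (* each Y_{a,n-a} is H-cospectral with the complete digraph *)
  (forall a : nat, (1 <= a <= n - 1)%N ->
     forall z, Hspectrum (Yarc n a) z = Hspectrum (Kn n) z)
  (* these n digraphs are pairwise non-isomorphic *)
  /\ (forall a : nat, (1 <= a <= n - 1)%N -> ~ digraph_iso (Kn n) (Yarc n a))
  /\ (forall a b : nat, (1 <= a <= n - 1)%N -> (1 <= b <= n - 1)%N ->
        digraph_iso (Yarc n a) (Yarc n b) -> a = b)
  (* every digraph H-cospectral with the complete digraph is one of them *)
  /\ (forall (m : nat) (arc : rel 'I_m), is_digraph arc ->
        (forall z, Hspectrum arc z = Hspectrum (Kn n) z) ->
        digraph_iso arc (Kn n) \/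
        exists a : nat, (1 <= a <= n - 1)%N /\ digraph_iso arc (Yarc n a)).
Proof.
move=> n1; split; first by move=> a _ z; exact: part1.
split; first exact: part2.
split; first exact: part3.
move=> m arc irr spec.
case: n n1 spec => [//|n'] _ spec.
have [em hex] := spec_size spec.
subst m.
exact: (classify irr (main_mat hex)).
Qed.
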